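(* Let $(X,\rho)$ be a complete locally compact $\mathbb R$-tree. For any two rooted orders $\sigma,\tau\in\mathcal O_+^r(X)$, the Hausdorff distance $\operatorname{Hd}(\sigma,\tau)$ (with respect to the sum metric $d_+$ on $X\times X$) is finite and equals $\rho(x,y)$, where $x$ is the root of $\tau$ and $y$ is the root of $\sigma$.
   Context: An $\mathbb R$-tree is a geodesic metric space in which any two points are joined by a unique segment and $[xy]\subset[xz]\cup[zy]$ for all $x,y,z$. $\mathcal O_+(X)$ is the set of partial orders $\tau$ on $X$ such that any two points have a supremum $x\vee y$, $x\,\tau\, z\,\tau\, y$ implies $\rho(x,z)+\rho(z,y)=\rho(x,y)$, $\rho(x,y)=\rho(x,x\vee y)+\rho(x\vee y,y)$ for all $x,y$, and every upper cone $\{y: x\,\tau\, y\}$ is linearly ordered. $\mathcal O_+^r(X)$ consists of those having a greatest element (root). Orders are regarded as subsets of $X\times X$ with metric $d_+((x_1,x_2),(y_1,y_2))=\rho(x_1,y_1)+\rho(x_2,y_2)$, and $\operatorname{Hd}(V,W)=\inf\{\varepsilon>0: V\subset\mathcal N_\varepsilon(W), W\subset\mathcal N_\varepsilon(V)\}$, $\mathcal N_\varepsilon$ denoting open $\varepsilon$-neighbourhoods in $d_+$. *)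

(* Defs.v *)
From Stdlib Require Import Reals Lra List.
Open Scope R_scope.

Definition is_metric {X : Type} (rho : X -> X -> R) : Prop :=
  (forall x y, 0 <= rho x y) /\
  (forall x y, rho x y = 0 <-> x = y) /\
  (forall x y, rho x y = rho y x) /\
  (forall x y z, rho x z <= rho x y + rho y z).

Definition ball {X : Type} (rho : X -> X -> R) (x : X) (r : R) : X -> Prop :=
  fun y => rho x y < r.

Definition is_open {X : Type} (rho : X -> X -> R) (U : X -> Prop) : Prop :=
  forall x, U x -> exists r, 0 < r /\ forall y, ball rho x r y -> U y.

Definition is_compact {X : Type} (rho : X -> X -> R) (K : X -> Prop) : Prop :=
  forall (I : Type) (U : I -> X -> Prop),
    (forall i, is_open rho (U i)) ->
    (forall x, K x -> exists i, U i x) ->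
    exists l : list I, forall x, K x -> exists i, In i l /\ U i x.

Definition locally_compact {X : Type} (rho : X -> X -> R) : Prop :=
  forall x, exists K, is_compact rho K /\
    exists r, 0 < r /\ forall y, ball rho x r y -> K y.

Definition cauchy_seq {X : Type} (rho : X -> X -> R) (u : nat -> X) : Prop :=
  forall eps, 0 < eps -> exists N, forall m n, (N <= m)%nat -> (N <= n)%nat ->
    rho (u m) (u n) < eps.

Definition converges_to {X : Type} (rho : X -> X -> R) (u : nat -> X) (l : X) : Prop :=
  forall eps, 0 < eps -> exists N, forall n, (N <= n)%nat -> rho (u n) l < eps.

Definition complete {X : Type} (rho : X -> X -> R) : Prop :=
  forall u, cauchy_seq rho u -> exists l, converges_to rho u l.

Definition is_geodesic {X : Type} (rho : X -> X -> R) (x y : X) (g : R -> X) : Prop :=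
  g 0 = x /\ g (rho x y) = y /\
  forall s t, 0 <= s <= rho x y -> 0 <= t <= rho x y -> rho (g s) (g t) = Rabs (s - t).

Definition image_on {X : Type} (g : R -> X) (d : R) : X -> Prop :=
  fun z => exists t, 0 <= t <= d /\ g t = z.

Definition segment {X : Type} (rho : X -> X -> R) (x y : X) : X -> Prop :=
  fun z => exists g, is_geodesic rho x y g /\ image_on g (rho x y) z.

Definition is_Rtree {X : Type} (rho : X -> X -> R) : Prop :=
  is_metric rho /\
  (forall x y, exists g, is_geodesic rho x y g) /\
  (forall x y g1 g2, is_geodesic rho x y g1 -> is_geodesic rho x y g2 ->
     forall z, image_on g1 (rho x y) z <-> image_on g2 (rho x y) z) /\
  (forall x y z w, segment rho x y w -> segment rho x z w \/ segment rho z y w).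

Definition is_sup {X : Type} (tau : X -> X -> Prop) (x y s : X) : Prop :=
  tau x s /\ tau y s /\ forall u, tau x u -> tau y u -> tau s u.

Definition partial_order {X : Type} (tau : X -> X -> Prop) : Prop :=
  (forall x, tau x x) /\
  (forall x y, tau x y -> tau y x -> x = y) /\
  (forall x y z, tau x y -> tau y z -> tau x z).

Definition O_plus {X : Type} (rho : X -> X -> R) (tau : X -> X -> Prop) : Prop :=
  partial_order tau /\
  (forall x y, exists s, is_sup tau x y s) /\
  (forall x z y, tau x z -> tau z y -> rho x z + rho z y = rho x y) /\
  (forall x y s, is_sup tau x y s -> rho x y = rho x s + rho s y) /\
  (forall x a b, tau x a -> tau x b -> tau a b \/ tau b a).

Definition is_root {X : Type} (tau : X -> X -> Prop) (r : X) : Prop :=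
  forall x, tau x r.

Definition O_plus_r {X : Type} (rho : X -> X -> R) (tau : X -> X -> Prop) : Prop :=
  O_plus rho tau /\ exists r, is_root tau r.

Definition d_plus {X : Type} (rho : X -> X -> R) (p q : X * X) : R :=
  rho (fst p) (fst q) + rho (snd p) (snd q).

Definition nbhd {X : Type} (rho : X -> X -> R) (eps : R) (W : X * X -> Prop) : X * X -> Prop :=
  fun p => exists q, W q /\ d_plus rho p q < eps.

Definition subset {A : Type} (V W : A -> Prop) : Prop := forall a, V a -> W a.

Definition Hd_set {X : Type} (rho : X -> X -> R) (V W : X * X -> Prop) : R -> Prop :=
  fun eps => 0 < eps /\ subset V (nbhd rho eps W) /\ subset W (nbhd rho eps V).

Definition is_glb (E : R -> Prop) (m : R) : Prop :=
  (forall e, E e -> m <= e) /\ (forall m', (forall e, E e -> m' <= e) -> m' <= m).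

(* Hd(V,W) is finite and equals h *)
Definition Hd_is {X : Type} (rho : X -> X -> R) (V W : X * X -> Prop) (h : R) : Prop :=
  (exists eps, Hd_set rho V W eps) /\ is_glb (Hd_set rho V W) h.

Definition graph {X : Type} (tau : X -> X -> Prop) : X * X -> Prop :=
  fun p => tau (fst p) (snd p).

(* Main.v *)
Require Import Defs.
From Stdlib Require Import Reals Lra.
Open Scope R_scope.



Lemma key (X : Type) (rho : X -> X -> R) (Hm : is_metric rho)
  (sigma tau : X -> X -> Prop)
  (Hs : O_plus rho sigma) (Ht : O_plus rho tau)
  (x y : X) (Hx : is_root tau x) (Hy : is_root sigma y) a b :
  sigma a b -> exists s, tau a s /\ rho b s <= rho x y.
Proof.
  intro Hab.
  destruct Hm as [H0 [Heq [Hsym Htri]]].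
  destruct Hs as [_ [_ [Bs _]]].
  destruct Ht as [_ [Sup [Bt [Jt _]]]].
  destruct (Sup a b) as [s Hsup].
  pose proof Hsup as [Has [Hbs _]].
  exists s; split; [exact Has|].
  assert (E1 := Jt a b s Hsup).
  assert (E2 := Bs a b y Hab (Hy b)).
  assert (E3 := Bt a s x Has (Hx s)).
  assert (E4 := Bt b s x Hbs (Hx s)).
  assert (T1 := Htri a x y).
  assert (T2 := Htri b y x).
  rewrite (Hsym s b) in *.
  rewrite (Hsym y x) in T2.
  lra.
Qed.

Theorem lemma1 (X : Type) (rho : X -> X -> R)
  (Htree : is_Rtree rho) (Hcomp : complete rho) (Hlc : locally_compact rho)
  (sigma tau : X -> X -> Prop)
  (Hs : O_plus_r rho sigma) (Ht : O_plus_r rho tau)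
  (x y : X) (Hx : is_root tau x) (Hy : is_root sigma y) :
  Hd_is rho (graph sigma) (graph tau) (rho x y).
Proof.
  destruct Htree as [Hm _].
  pose proof Hm as [H0 [Heq [Hsym Htri]]].
  destruct Hs as [Hs _]. destruct Ht as [Ht _].
  assert (Hall : forall e, rho x y < e -> Hd_set rho (graph sigma) (graph tau) e).
  { intros e He. split; [pose proof (H0 x y); lra|]. split.
    - intros [a b] Hab. unfold graph in Hab; simpl in Hab.
      destruct (key X rho Hm sigma tau Hs Ht x y Hx Hy a b Hab) as [s [Has Hb]].
      exists (a, s). split; [exact Has|]. unfold d_plus; simpl.
      rewrite (proj2 (Heq a a) eq_refl). lra.
    - intros [a b] Hab. unfold graph in Hab; simpl in Hab.
      destruct (key X rho Hm tau sigma Ht Hs y x Hy Hx a b Hab) as [s [Has Hb]].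
      exists (a, s). split; [exact Has|]. unfold d_plus; simpl.
      rewrite (proj2 (Heq a a) eq_refl). rewrite (Hsym y x) in Hb. lra. }
  split.
  - exists (rho x y + 1). apply Hall. lra.
  - split.
    + intros e [Hpos [Hsub _]].
      destruct (Hsub (x, y) (Hy x)) as [[a b] [Hq Hd]].
      unfold graph in Hq; unfold d_plus in Hd; simpl in *.
      destruct Ht as [_ [_ [Bt _]]].
      assert (E := Bt a b x Hq (Hx b)).
      assert (T := Htri x b y).
      assert (T2 := H0 a b).
      rewrite (Hsym x a), (Hsym x b) in *. rewrite (Hsym y b) in Hd.
      lra.
    + intros m' Hm'.
      destruct (Rle_or_lt m' (rho x y)) as [h|h]; [exact h|].
      exfalso. assert (Hh : rho x y < (rho x y + m')/2) by lra. assert (HH := Hm' _ (Hall _ Hh)). lra.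
Qed.
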